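(* Let $\mathcal{X}=\{0,1\}^{\mathbb{N}}$ with the product topology. For $\eta=(\eta_1,\eta_2,\ldots)\in\mathcal{X}$ let $a_n(\eta)=\#\{1\le i\le n:\eta_i=1\}$, let $\mathcal{Y}\subset\mathcal{X}$ be the set of $\eta$ for which $q(\eta)=\lim_{n\to\infty}a_n(\eta)/n$ exists, and let $\mathcal{Z}_{1/2}=\{\eta\in\mathcal{Y}: q(\eta)=1/2\}$. Fix $\rho>1$. For a subset $\mathcal{Z}\subset\mathcal{Y}$ and continuous functions $x,y:\mathcal{Z}\to[0,\infty)$ define the function $x\oplus y$ on $\mathcal{Z}$ pointwise by $$(x\oplus y)(\eta)=\sup_{p\in[0,1]\cap\mathbb{Q}}\rho^{-\mathrm{KL}(p;q(\eta))}x(\eta)^py(\eta)^{1-p}.$$ Then $x\oplus y=y\oplus x$ for all continuous $x,y:\mathcal{Z}\to[0,\infty)$ if and only if $\mathcal{Z}\subset\mathcal{Z}_{1/2}$.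
   Context: $\mathrm{KL}(p;q)=p\log\frac{p}{q}+(1-p)\log\frac{1-p}{1-q}$ for $p,q\in[0,1]$, with the conventions $0\log(0/a)=0$ for all $a\ge0$, $a\log(a/0)=+\infty$ for $a>0$, $\rho^{-\infty}=0$, and $0^0=1$. *)

(* Defs.v *)
From HB Require Import structures.
From mathcomp Require Import all_boot all_order all_algebra.
From mathcomp Require Import all_classical all_reals all_analysis.
Set Implicit Arguments. Unset Strict Implicit. Unset Printing Implicit Defensive.
Import Order.TTheory GRing.Theory Num.Theory.
Import numFieldTopology.Exports.
Local Open Scope classical_set_scope.
Local Open Scope ring_scope.

(* X = {0,1}^N with the product topology; eta i (i = 0,1,2,...) is the
   paper's eta_(i+1). *)
Definition cantor := {ptws nat -> bool}.

Definition a_n (n : nat) (eta : cantor) : nat := \sum_(i < n) nat_of_bool (eta i).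

Section Defs.
Variable R : realType.

Definition freq (eta : cantor) : R^nat := fun n => (a_n n eta)%:R / n%:R.

Definition Yset : set cantor := [set eta | cvgn (freq eta)].

Definition qfreq (eta : cantor) : R := limn (freq eta).

Definition Zhalf : set cantor := [set eta | Yset eta /\ qfreq eta = 2^-1].

Definition xlogxy (a b : R) : \bar R :=
  if a == 0 then 0%E else if b == 0 then +oo%E else (a * ln (a / b))%:E.

Definition KL (p q : R) : \bar R := (xlogxy p q + xlogxy (1 - p) (1 - q))%E.

(* rho^(-e) with rho^(-oo) = 0; the -oo case never arises for p,q in [0,1]. *)
Definition rho_pow_neg (rho : R) (e : \bar R) : R :=
  match e with
  | EFin r => rho `^ (- r)
  | _ => 0
  end.

(* (x (+) y)(eta) = sup_{p in [0,1] cap Q} rho^(-KL(p;q(eta))) x^p y^(1-p),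
   with powR satisfying 0^0 = 1. *)
Definition oplus (rho : R) (x y : cantor -> R) (eta : cantor) : R :=
  sup [set z | exists p : rat, (0 <= p <= 1) /\
        z = rho_pow_neg rho (KL (ratr p) (qfreq eta))
            * x eta `^ (ratr p) * y eta `^ (1 - ratr p)].
End Defs.

(* Main.v *)
Require Import Defs.
From HB Require Import structures.
From mathcomp Require Import all_boot all_order all_algebra.
From mathcomp Require Import all_classical all_reals all_analysis.
From mathcomp Require Import lra.
Import Order.TTheory GRing.Theory Num.Theory.
Import numFieldTopology.Exports.
Local Open Scope classical_set_scope.
Local Open Scope ring_scope.

Lemma a_n_le n eta : (a_n n eta <= n)%N.
Proof.
rewrite /a_n -[leqRHS]card_ord -sum1_card; apply: leq_sum => i _.
exact: leq_b1.
Qed.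

Lemma freq_bnd (R : realType) eta n : 0 <= freq R eta n <= 1.
Proof.
rewrite /freq; case: n => [|n].
  by rewrite invr0 mulr0 lexx ler01.
rewrite divr_ge0 //= ler_pdivrMr ?ltr0Sn // mul1r ler_nat; exact: a_n_le.
Qed.

Lemma qfreq_bnd (R : realType) eta : Yset R eta -> 0 <= qfreq R eta <= 1.
Proof.
move=> Y; apply/andP; split.
  apply: limr_ge => //; apply: nearW => n; by case/andP: (freq_bnd R eta n).
apply: limr_le => //; apply: nearW => n; by case/andP: (freq_bnd R eta n).
Qed.

Lemma rpn_ge0 (R : realType) (rho : R) e : 0 <= rho_pow_neg rho e.
Proof. by case: e => //= r; exact: powR_ge0. Qed.

Lemma sup2 (R : realType) (S : set R) v :
  S v -> (forall z, S z -> z = v \/ z = 0) -> 0 <= v -> sup S = v.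
Proof.
move=> Sv HS v0; apply/eqP; rewrite eq_le; apply/andP; split.
  apply: ge_sup; first by exists v.
  by move=> z /HS [->|->].
apply: ub_le_sup => //; exists v => z /HS [->|->] //.
Qed.

Lemma oplus01 (R : realType) (rho : R) eta :
  oplus rho (fun _ => 0) (fun _ => 1) eta = rho_pow_neg rho (KL 0 (qfreq R eta)).
Proof.
apply: sup2; last exact: rpn_ge0.
  exists 0%Q; split => //.
  by rewrite rmorph0 powRr0 powR1 !mulr1.
move=> z [p [_ ->]]; rewrite powR1 mulr1.
have [/eqP p0|p0] := boolP (ratr p == 0 :> R).
  by left; rewrite p0 powRr0 mulr1.
by right; rewrite powR0 // mulr0.
Qed.

Lemma oplus10 (R : realType) (rho : R) eta :
  oplus rho (fun _ => 1) (fun _ => 0) eta = rho_pow_neg rho (KL 1 (qfreq R eta)).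
Proof.
apply: sup2; last exact: rpn_ge0.
  exists 1%Q; split => //.
  by rewrite rmorph1 subrr powRr0 powR1 !mulr1.
move=> z [p [_ ->]]; rewrite powR1 mulr1.
have [/eqP p0|p0] := boolP (1 - ratr p == 0 :> R).
  by left; rewrite p0 powRr0 mulr1; move/eqP: p0; rewrite subr_eq0 => /eqP <-.
by right; rewrite powR0 // mulr0.
Qed.

Lemma half_sym (R : realType) : 1 - 2^-1 = 2^-1 :> R.
Proof. lra. Qed.

Lemma term_sym (R : realType) (rho a b : R) (p : rat) :
  rho_pow_neg rho (KL (ratr p) 2^-1) * a `^ ratr p * b `^ (1 - ratr p) =
  rho_pow_neg rho (KL (ratr (1 - p)) 2^-1) * b `^ ratr (1 - p)
    * a `^ (1 - ratr (1 - p)).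
Proof.
have e : ratr (1 - p) = 1 - ratr p :> R by rewrite rmorphB rmorph1.
have e2 : 1 - (1 - ratr p) = ratr p :> R by rewrite opprB addrCA subrr addr0.
rewrite e e2 /KL e2 half_sym addeC; by rewrite mulrAC.
Qed.

Theorem proposition8p5 (R : realType) (rho : R) (hrho : 1 < rho)
    (Z : set cantor) (hZ : Z `<=` Yset R) :
  (forall x y : cantor -> R,
      {within Z, continuous x} -> {within Z, continuous y} ->
      (forall eta, Z eta -> 0 <= x eta) -> (forall eta, Z eta -> 0 <= y eta) ->
      forall eta, Z eta -> oplus rho x y eta = oplus rho y x eta)
  <-> Z `<=` Zhalf R.
Proof.
split.
- move=> H eta Zeta; split; first exact: hZ.
  have := H (fun _ => 0) (fun _ => 1) (continuous_subspaceT (@cst_continuous _ _ _))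
    (continuous_subspaceT (@cst_continuous _ _ _)) (fun _ _ => lexx 0)
    (fun _ _ => ler01) eta Zeta.
  rewrite oplus01 oplus10 /KL /xlogxy !eqxx subr0 subrr !eqxx.
  have /andP[q0 q1] := @qfreq_bnd R eta (hZ _ Zeta).
  set q := qfreq R eta.
  have [/eqP->|qn0] := boolP (q == 0).
    rewrite ?subr0 ?oner_eq0 ?eqxx /= mul1r divr1 ln1 ?add0e ?adde0 /= ?addr0 ?oppr0 powRr0.
    by move=> /eqP; rewrite oner_eq0.
  have [/eqP q1e|qn1] := boolP (q == 1).
    rewrite q1e ?subrr ?eqxx ?oner_eq0 /= mul1r divr1 ln1 ?add0e ?adde0 /= ?addr0 ?oppr0 powRr0.
    by move=> /eqP; rewrite eq_sym oner_eq0.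
  have q1' : 1 - q != 0 by rewrite subr_eq0 eq_sym.
  rewrite (negbTE q1') oner_eq0 /= add0r addr0 !mul1r.
  have qp : 0 < q by rewrite lt_neqAle eq_sym qn0.
  have qp' : 0 < 1 - q by rewrite lt_neqAle eq_sym q1' subr_ge0.
  move=> /(congr1 (@ln R)); rewrite !ln_powR.
  have lr : ln rho != 0 by rewrite gt_eqF // ln_gt0.
  move/(mulIf lr)/oppr_inj; rewrite !lnV ?posrE // => /oppr_inj.
  move/ln_inj; rewrite !posrE => /(_ qp' qp) e.
  lra.
- move=> HZ x y _ _ _ _ eta Zeta.
  have [_ qh] := HZ _ Zeta.
  rewrite /oplus qh; congr sup; apply/seteqP; split => z [p [hp ->]].
  + exists (1 - p)%R; split.
      by rewrite subr_ge0 lerBlDr lerDl; case/andP: hp => -> ->.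
    exact: term_sym.
  + exists (1 - p)%R; split.
      by rewrite subr_ge0 lerBlDr lerDl; case/andP: hp => -> ->.
    by rewrite term_sym.
Qed.
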